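(* Let $(A,[-,-,-],\varepsilon)$ be a ternary Leibniz color algebra. Then $A\otimes A$, graded by $(A\otimes A)_c=\bigoplus_{a+b=c}A_a\otimes A_b$, is a Leibniz color algebra with the bracket defined on homogeneous tensors by $$[x\otimes y,\,x'\otimes y']:=x\otimes[y,x',y']+\varepsilon(y,x'+y')\,[x,x',y']\otimes y$$ and extended bilinearly.
   Context: $G$ is an abelian group, $\mathbb{K}$ a field of characteristic $\neq 2$, $\mathcal{H}(V)$ the homogeneous elements of a $G$-graded space $V$; even maps preserve degree. A skew-symmetric bicharacter $\varepsilon:G\times G\to\mathbb{K}^*$ satisfies $\varepsilon(a,b)\varepsilon(b,a)=1$, $\varepsilon(a,b+c)=\varepsilon(a,b)\varepsilon(a,c)$, $\varepsilon(a+b,c)=\varepsilon(a,c)\varepsilon(b,c)$; $\varepsilon(x,y)$ means $\varepsilon$ of the degrees. A Leibniz color algebra is a $G$-graded space with an even bilinear $[-,-]$ such that $[[x,y],z]=[x,[y,z]]+\varepsilon(y,z)[[x,z],y]$ for homogeneous $x,y,z$. A ternary Leibniz color algebra is a $G$-graded space with such $\varepsilon$ and an even trilinear $[-,-,-]$ satisfying $[[x,y,z],t,u]=[x,y,[z,t,u]]+\varepsilon(z,t+u)[x,[y,t,u],z]+\varepsilon(y+z,t+u)[[x,t,u],y,z]$ for all homogeneous $x,y,z,t,u$. *)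

(* Defs.v *)
From HB Require Import structures.
From mathcomp Require Import all_boot all_algebra.
From mathcomp Require Import finmap.
From mathcomp.multinomials Require Export monalg.

Set Implicit Arguments.
Unset Strict Implicit.
Unset Printing Implicit Defensive.
Import GRing.Theory.
Local Open Scope ring_scope.

(* A G-graded K-vector space, presented through a homogeneous basis B with a
   degree map deg : B -> G : the space is {malg K[B]} (finitely supported
   K-valued functions on B), and its degree-g component is the span of the
   basis vectors of degree g. *)

Definition homog (G : zmodType) (K : fieldType) (B : choiceType)
  (deg : B -> G) (g : G) (x : {malg K[B]}) : Prop :=
  forall i, i \in msupp x -> deg i = g.

Definition skew_bichar (G : zmodType) (K : fieldType) (eps : G -> G -> K) : Prop :=
  [/\ forall a b, eps a b != 0,
      forall a b, eps a b * eps b a = 1,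
      forall a b c, eps a (b + c) = eps a b * eps a c
    & forall a b c, eps (a + b) c = eps a c * eps b c].

Definition ternary_leibniz_color (G : zmodType) (K : fieldType) (B : choiceType)
  (deg : B -> G) (eps : G -> G -> K)
  (br : {malg K[B]} -> {malg K[B]} -> {malg K[B]} -> {malg K[B]}) : Prop :=
  [/\ (forall y z, linear (fun x => br x y z)),
      (forall x z, linear (fun y => br x y z)),
      (forall x y, linear (fun z => br x y z)),
      (forall a b c x y z, homog deg a x -> homog deg b y -> homog deg c z ->
          homog deg (a + b + c) (br x y z))
    & (forall a b c d e x y z t u,
        homog deg a x -> homog deg b y -> homog deg c z ->
        homog deg d t -> homog deg e u ->
        br (br x y z) t u =
          br x y (br z t u)
          + eps c (d + e) *: br x (br y t u) z
          + eps (b + c) (d + e) *: br (br x t u) y z)].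

Definition leibniz_color (G : zmodType) (K : fieldType) (B : choiceType)
  (deg : B -> G) (eps : G -> G -> K)
  (br : {malg K[B]} -> {malg K[B]} -> {malg K[B]}) : Prop :=
  [/\ (forall y, linear (fun x => br x y)),
      (forall x, linear (fun y => br x y)),
      (forall a b x y, homog deg a x -> homog deg b y ->
          homog deg (a + b) (br x y))
    & (forall a b c x y z,
        homog deg a x -> homog deg b y -> homog deg c z ->
        br (br x y) z = br x (br y z) + eps b c *: br (br x z) y)].

(* Tensor square: A (x) A has basis B * B, with (A (x) A)_c spanned by the
   basis tensors e_i (x) e_j with deg i + deg j = c. *)
Definition tdeg (G : zmodType) (B : choiceType) (deg : B -> G) (p : (B * B)%type) : G :=
  deg p.1 + deg p.2.

Definition tens (K : fieldType) (B : choiceType) (x y : {malg K[B]})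
  : {malg K[(B * B)%type]} :=
  \sum_(i <- msupp x) \sum_(j <- msupp y) << x@_i * y@_j *g (i, j) >>.

Definition tbracket (G : zmodType) (K : fieldType) (B : choiceType)
  (deg : B -> G) (eps : G -> G -> K)
  (br : {malg K[B]} -> {malg K[B]} -> {malg K[B]} -> {malg K[B]})
  (S T : {malg K[(B * B)%type]}) : {malg K[(B * B)%type]} :=
  \sum_(p <- msupp S) \sum_(q <- msupp T)
    (S@_p * T@_q) *:
      (tens << p.1 >> (br << p.2 >> << q.1 >> << q.2 >>)
       + eps (deg p.2) (deg q.1 + deg q.2) *:
           tens (br << p.1 >> << q.1 >> << q.2 >>) << p.2 >>).

(* Main.v *)
Require Import Defs.
From mathcomp Require Import all_boot all_algebra ssrAC ring.
From mathcomp Require Import finmap.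
From mathcomp.multinomials Require Import monalg.
Set Implicit Arguments.
Unset Strict Implicit.
Import GRing.Theory.
Local Open Scope fset_scope.
Local Open Scope ring_scope.

Section Gen.
Variables (K : fieldType) (C : choiceType).
Implicit Types (S T : {malg K[C]}).

Definition islin (V W : lmodType K) (f : V -> W) := forall a u v, f (a *: u + v) = a *: f u + f v.

Lemma islin0 (V W : lmodType K) (f : V -> W) : islin f -> f 0 = 0.
Proof.
move=> h; have e := h 1 0 0; rewrite !scale1r addr0 in e.
by apply: (@addrI _ (f 0)); rewrite addr0 -e.
Qed.

Lemma islinD (V W : lmodType K) (f : V -> W) : islin f -> forall u v, f (u + v) = f u + f v.
Proof. by move=> h u v; have := h 1 u v; rewrite !scale1r. Qed.

Lemma islinZ (V W : lmodType K) (f : V -> W) : islin f -> forall a u, f (a *: u) = a *: f u.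
Proof. by move=> h a u; have := h a u 0; rewrite (islin0 h) !addr0. Qed.

Lemma islin_comp (U V W : lmodType K) (f : U -> V) (g : V -> W) :
  islin f -> islin g -> islin (fun u => g (f u)).
Proof. by move=> hf hg a u v; rewrite (hf a u v) (hg a). Qed.

Lemma islin_addZ (V W : lmodType K) (f g : V -> W) c :
  islin f -> islin g -> islin (fun u => f u + c *: g u).
Proof.
move=> hf hg a u v; rewrite (hf a u v) (hg a u v) scalerDr !scalerA mulrC -!scalerA.
by rewrite scalerDr addrACA.
Qed.

Definition ext (V : lmodType K) S (F : C -> V) := \sum_(p <- msupp S) S@_p *: F p.

Lemma malgUZ (c : K) (k : C) : << c *g k >> = c *: << k >>.
Proof. by apply/malgP => k'; rewrite mcoeffZ !mcoeffU mulr_natr. Qed.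

Lemma lin_ext (V : lmodType K) (L : {malg K[C]} -> V) S :
  islin L -> L S = ext S (fun p => L << p >>).
Proof.
move=> hL; rewrite {1}[S]monalgE /ext.
elim: (msupp S : seq C) => [|p s IH]; first by rewrite !big_nil (islin0 hL).
by rewrite !big_cons malgUZ (hL _ _ _) IH.
Qed.

Lemma ext_in (V : lmodType K) S (F G : C -> V) :
  (forall p, p \in msupp S -> F p = G p) -> ext S F = ext S G.
Proof. by move=> h; rewrite /ext !big_seq; apply: eq_bigr => p /h ->. Qed.

Definition bil (V : lmodType K) (F : C -> C -> V) S T :=
  \sum_(p <- msupp S) \sum_(q <- msupp T) (S@_p * T@_q) *: F p q.

Lemma bilEw (V : lmodType K) (F : C -> C -> V) S T d1 d2 :
  msupp S `<=` d1 -> msupp T `<=` d2 ->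
  bil F S T = \sum_(p <- d1) \sum_(q <- d2) (S@_p * T@_q) *: F p q.
Proof.
move=> h1 h2; rewrite /bil (big_fset_incl _ h1) /=; last first.
  by move=> p _ /mcoeff_outdom ->; apply: big1 => q _; rewrite mul0r scale0r.
apply: eq_bigr => p _; rewrite (big_fset_incl _ h2) //= => q _ /mcoeff_outdom ->.
by rewrite mulr0 scale0r.
Qed.

Lemma bil_lin1 (V : lmodType K) (F : C -> C -> V) T : islin (fun S => bil F S T).
Proof.
move=> a u v.
have s1 : msupp u `<=` msupp u `|` msupp v by apply: fsubsetUl.
have s2 : msupp v `<=` msupp u `|` msupp v by apply: fsubsetUr.
have s3 : msupp (a *: u + v) `<=` msupp u `|` msupp v.
  apply: fsubset_trans (msuppD_le _ _) _; apply: fsetSU; exact: msuppZ_le.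
rewrite (bilEw F s3 (fsubset_refl _)) (bilEw F s1 (fsubset_refl _)).
rewrite (bilEw F s2 (fsubset_refl _)) scaler_sumr -big_split /=.
apply: eq_bigr => p _; rewrite scaler_sumr -big_split /=; apply: eq_bigr => q _.
by rewrite mcoeffD mcoeffZ scalerA mulrDl mulrA scalerDl.
Qed.

Lemma bil_lin2 (V : lmodType K) (F : C -> C -> V) S : islin (fun T => bil F S T).
Proof.
move=> a u v.
have s1 : msupp u `<=` msupp u `|` msupp v by apply: fsubsetUl.
have s2 : msupp v `<=` msupp u `|` msupp v by apply: fsubsetUr.
have s3 : msupp (a *: u + v) `<=` msupp u `|` msupp v.
  apply: fsubset_trans (msuppD_le _ _) _; apply: fsetSU; exact: msuppZ_le.
rewrite (bilEw F (fsubset_refl _) s3) (bilEw F (fsubset_refl _) s1).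
rewrite (bilEw F (fsubset_refl _) s2) scaler_sumr -big_split /=.
apply: eq_bigr => p _; rewrite scaler_sumr -big_split /=; apply: eq_bigr => q _.
rewrite mcoeffD mcoeffZ scalerA mulrDr scalerDl; congr (_ *: _ + _).
by rewrite mulrCA.
Qed.

Lemma msuppU1' (k : C) : msupp (<< k >> : {malg K[C]}) = [fset k].
Proof. by rewrite msuppU oner_eq0. Qed.

Lemma bilU (V : lmodType K) (F : C -> C -> V) p q : bil F << p >> << q >> = F p q.
Proof. by rewrite /bil !msuppU1' !big_seq_fset1 !mcoeffUU mulr1 scale1r. Qed.

End Gen.

Lemma ext_eq (K : fieldType) (C : choiceType) (V : lmodType K)
  (L R : {malg K[C]} -> V) S :
  islin L -> islin R -> (forall p, p \in msupp S -> L << p >> = R << p >>) -> L S = R S.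
Proof. by move=> hL hR h; rewrite (lin_ext S hL) (lin_ext S hR); exact: ext_in. Qed.


Lemma abstractLB (G : zmodType) (K : fieldType) (eps : G -> G -> K) (V W : lmodType K)
  (t : V -> V -> W) :
  skew_bichar eps ->
  (forall y, islin (fun x => t x y)) -> (forall x, islin (fun y => t x y)) ->
  forall dy dx' dy' dx'' dy'' (x y A1 A2 A3 P Q R S A6 A7 A8 : V),
  t x (A1 + eps dy' (dx'' + dy'') *: A2 + eps (dx' + dy') (dx'' + dy'') *: A3) +
  eps (dy + dx' + dy') (dx'' + dy'') *: t P Q +
  eps dy (dx' + dy') *:
  (t R S +
   eps dy (dx'' + dy'') *:
   t (A6 + eps dy' (dx'' + dy'') *: A7 + eps (dx' + dy') (dx'' + dy'') *: A8) y) =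
  t x A1 +
  eps dy (dx' + (dy' + dx'' + dy'')) *: t A6 y +
  eps dy' (dx'' + dy'') *:
  (t x A2 +
   eps dy (dx' + dx'' + dy'' + dy') *: t A7 y) +
  eps (dx' + dy') (dx'' + dy'') *:
  (t x A3 +
   eps (dy + dx'' + dy'') (dx' + dy') *: t R S +
   eps dy (dx'' + dy'') *:
   (t P Q +
    eps dy (dx' + dy') *: t A8 y)).
Proof.
case=> _ hsk hDr hDl h1 h2 dy dx' dy' dx'' dy'' x y A1 A2 A3 P Q R S A6 A7 A8.
have tD1 u v w : t (u + v) w = t u w + t v w by have := h1 w 1 u v; rewrite !scale1r.
have tZ1 a u w : t (a *: u) w = a *: t u w.
  have := h1 w a u 0; rewrite !addr0 => ->.
  have := h1 w 1 0 0; rewrite !scale1r !addr0 => e.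
  suff -> : t 0 w = 0 by rewrite addr0.
  by apply: (@addrI _ (t 0 w)); rewrite addr0 -e.
have tD2 u v w : t w (u + v) = t w u + t w v by have := h2 w 1 u v; rewrite !scale1r.
have tZ2 a u w : t w (a *: u) = a *: t w u.
  have := h2 w a u 0; rewrite !addr0 => ->.
  have := h2 w 1 0 0; rewrite !scale1r !addr0 => e.
  suff -> : t w 0 = 0 by rewrite addr0.
  by apply: (@addrI _ (t w 0)); rewrite addr0 -e.
rewrite !tD1 !tZ1 !tD2 !tZ2 !scalerDr !scalerA !addrA.
rewrite [RHS](ACl (1*3*5*7*6*2*4*8))%AC.
congr (_ + _ *: _ + _ *: _ + _ *: _ + _ *: _ + _ *: _ + _ *: _ + _ *: _).
- by rewrite -(@addrA G dy) (hDl dy) [RHS]mulrC.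
- by rewrite -(@addrA G dy) (hDl dy) mulrCA hsk mulr1.
- by rewrite -hDr !(@addrA G).
- rewrite -[eps dy (dx' + dy') * _]hDr mulrC; congr (_ * eps _ _).
  by rewrite (@addrA G) (@addrAC G dx') (@addrAC G (dx' + dx'')).
- ring.
Qed.


Section Spec.
Variables (G : zmodType) (K : fieldType) (B : choiceType) (deg : B -> G).
Implicit Types (x y : {malg K[B]}).

Lemma coefE x i0 : x@_i0 = \sum_(i <- msupp x) x@_i *+ (i == i0).
Proof.
by rewrite {1}[x]monalgE raddf_sum; apply: eq_bigr => i _; exact: mcoeffU.
Qed.

Lemma tens_coef x y i0 j0 : (tens x y)@_(i0, j0) = x@_i0 * y@_j0.
Proof.
rewrite /tens raddf_sum (coefE x) (coefE y) big_distrl /=.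
apply: eq_bigr => i _; rewrite raddf_sum big_distrr /=; apply: eq_bigr => j _.
rewrite (mcoeffU _ _ (i0, j0)) xpair_eqE.
by case: eqP; case: eqP; rewrite ?mulr0n ?mul0r ?mulr0 ?mulr1n.
Qed.

Lemma tens_lin1 y : islin (fun x => tens x y).
Proof.
by move=> a u v; apply/malgP => -[i j]; rewrite mcoeffD mcoeffZ !tens_coef mcoeffD mcoeffZ mulrDl mulrA.
Qed.

Lemma tens_lin2 x : islin (fun y => tens x y).
Proof.
by move=> a u v; apply/malgP => -[i j]; rewrite mcoeffD mcoeffZ !tens_coef mcoeffD mcoeffZ mulrDr mulrCA.
Qed.

Lemma tensU i j : tens (<< i >> : {malg K[B]}) << j >> = << (i, j) >>.
Proof.
apply/malgP => -[i' j']; rewrite tens_coef !mcoeffU xpair_eqE.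
by case: eqP; case: eqP; rewrite ?mulr0n ?mul0r ?mulr0 ?mulr1n ?mulr1.
Qed.

Lemma homog0 g : homog deg g (0 : {malg K[B]}).
Proof. by move=> i; rewrite msupp0. Qed.

Lemma homogD g x y : homog deg g x -> homog deg g y -> homog deg g (x + y).
Proof.
move=> hx hy i /(fsubsetP (msuppD_le _ _)); rewrite inE => /orP[]; [exact: hx|exact: hy].
Qed.

Lemma homogZ g a x : homog deg g x -> homog deg g (a *: x).
Proof. by move=> hx i /(fsubsetP (msuppZ_le _ _)); exact: hx. Qed.

Lemma homogE g g' x : homog deg g x -> g = g' -> homog deg g' x.
Proof. by move=> h <-. Qed.

Lemma homogU i : homog deg (deg i) (<< i >> : {malg K[B]}).
Proof. by move=> k; rewrite msuppU1' inE => /eqP ->. Qed.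

Lemma homog_ext (C : choiceType) g (S : {malg K[C]}) (F : C -> {malg K[B]}) :
  (forall p, p \in msupp S -> homog deg g (F p)) -> homog deg g (ext S F).
Proof.
move=> h; rewrite /ext big_seq; elim/big_rec: _ => [|p z pS hz]; first exact: homog0.
by apply: homogD => //; apply: homogZ; exact: h.
Qed.

End Spec.

Lemma homog_tens (G : zmodType) (K : fieldType) (B : choiceType) (deg : B -> G) a b (x y : {malg K[B]}) :
  homog deg a x -> homog deg b y -> homog (tdeg deg) (a + b) (tens x y).
Proof.
move=> hx hy [i j]; rewrite -mcoeff_neq0 tens_coef mulf_eq0 negb_or.
by rewrite !mcoeff_neq0 => /andP[/hx <- /hy <-].
Qed.

Section Main.
Variables (G : zmodType) (K : fieldType) (B : choiceType) (deg : B -> G)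
  (eps : G -> G -> K)
  (br : {malg K[B]} -> {malg K[B]} -> {malg K[B]} -> {malg K[B]}).
Hypothesis hsk : skew_bichar eps.
Hypothesis htl : ternary_leibniz_color deg eps br.

Definition F (p q : (B * B)%type) : {malg K[(B * B)%type]} :=
      (tens << p.1 >> (br << p.2 >> << q.1 >> << q.2 >>)
       + eps (deg p.2) (deg q.1 + deg q.2) *:
           tens (br << p.1 >> << q.1 >> << q.2 >>) << p.2 >>).

Local Notation tbr := (tbracket deg eps br).

Lemma tbrE S T : tbr S T = bil F S T.
Proof. by []. Qed.

Lemma tbr_lin1 T : islin (fun S => tbr S T).
Proof. exact: bil_lin1. Qed.
Lemma tbr_lin2 S : islin (fun T => tbr S T).
Proof. exact: bil_lin2. Qed.

Lemma br_lin1 y z : islin (fun x => br x y z).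
Proof. by case: htl => h _ _ _ _; exact: h. Qed.
Lemma br_lin2 x z : islin (fun y => br x y z).
Proof. by case: htl => _ h _ _ _; exact: h. Qed.
Lemma br_lin3 x y : islin (fun z => br x y z).
Proof. by case: htl => _ _ h _ _; exact: h. Qed.

Lemma TB0 i j i' j' :
  tbr (tens << i >> << j >>) (tens << i' >> << j' >>) =
  tens << i >> (br << j >> << i' >> << j' >>)
  + eps (deg j) (deg i' + deg j') *: tens (br << i >> << i' >> << j' >>) << j >>.
Proof. by rewrite !tensU tbrE bilU. Qed.

Lemma TB a b a' b' x y x' y' :
  homog deg a x -> homog deg b y -> homog deg a' x' -> homog deg b' y' ->
  tbr (tens x y) (tens x' y') = tens x (br y x' y') + eps b (a' + b') *: tens (br x x' y') y.
Proof.
move=> hx hy hx' hy'; set c := eps b (a' + b').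
apply (@ext_eq _ _ _ (fun u => tbr (tens u y) (tens x' y'))
   (fun u => tens u (br y x' y') + c *: tens (br u x' y') y) x).
- exact: islin_comp (tens_lin1 _) (tbr_lin1 _).
- exact: islin_addZ (tens_lin1 _) (islin_comp (br_lin1 _ _) (tens_lin1 _)).
move=> i _ /=.
apply (@ext_eq _ _ _ (fun u => tbr (tens << i >> u) (tens x' y'))
   (fun u => tens << i >> (br u x' y') + c *: tens (br << i >> x' y') u) y).
- exact: islin_comp (tens_lin2 _) (tbr_lin1 _).
- exact: islin_addZ (islin_comp (br_lin1 _ _) (tens_lin2 _)) (tens_lin2 _).
move=> j hj /=.
apply (@ext_eq _ _ _ (fun u => tbr (tens << i >> << j >>) (tens u y'))
   (fun u => tens << i >> (br << j >> u y') + c *: tens (br << i >> u y') << j >>) x').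
- exact: islin_comp (tens_lin1 _) (tbr_lin2 _).
- exact: islin_addZ (islin_comp (br_lin2 _ _) (tens_lin2 _))
                    (islin_comp (br_lin2 _ _) (tens_lin1 _)).
move=> i' hi' /=.
apply (@ext_eq _ _ _ (fun u => tbr (tens << i >> << j >>) (tens << i' >> u))
   (fun u => tens << i >> (br << j >> << i' >> u) + c *: tens (br << i >> << i' >> u) << j >>) y').
- exact: islin_comp (tens_lin2 _) (tbr_lin2 _).
- exact: islin_addZ (islin_comp (br_lin3 _ _) (tens_lin2 _))
                    (islin_comp (br_lin3 _ _) (tens_lin1 _)).
move=> j' hj' /=.
by rewrite TB0 /c (hy _ hj) (hx' _ hi') (hy' _ hj').
Qed.


Lemma tbrDl S1 S2 T : tbr (S1 + S2) T = tbr S1 T + tbr S2 T.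
Proof. exact: (islinD (tbr_lin1 T)). Qed.
Lemma tbrZl a S T : tbr (a *: S) T = a *: tbr S T.
Proof. exact: (islinZ (tbr_lin1 T)). Qed.
Lemma tbrDr S T1 T2 : tbr S (T1 + T2) = tbr S T1 + tbr S T2.
Proof. exact: (islinD (tbr_lin2 S)). Qed.
Lemma tbrZr a S T : tbr S (a *: T) = a *: tbr S T.
Proof. exact: (islinZ (tbr_lin2 S)). Qed.

Lemma hbr i j k : homog deg (deg i + deg j + deg k) (br << i >> << j >> << k >>).
Proof. by case: htl => _ _ _ h _; apply: h; exact: homogU. Qed.

Lemma hbrg a b c x y z : homog deg a x -> homog deg b y -> homog deg c z ->
  homog deg (a + b + c) (br x y z).
Proof. by case: htl => _ _ _ h _; exact: h. Qed.

Fact tl_key : unit. Proof. by []. Qed.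
Definition tl := locked_with tl_key (@tens K B).
Lemma tlE x y : tens x y = tl x y.
Proof. by rewrite /tl /locked_with; case: tl_key. Qed.
Lemma tl_coef x y i0 j0 : (tl x y)@_(i0, j0) = x@_i0 * y@_j0.
Proof. by rewrite -tlE tens_coef. Qed.

Lemma tl_lin1 y : islin (fun x => tl x y).
Proof. by move=> a u v; rewrite -!tlE; exact: tens_lin1. Qed.
Lemma tl_lin2 x : islin (fun y => tl x y).
Proof. by move=> a u v; rewrite -!tlE; exact: tens_lin2. Qed.

Lemma TBl a b a' b' x y x' y' :
  homog deg a x -> homog deg b y -> homog deg a' x' -> homog deg b' y' ->
  tbr (tl x y) (tl x' y') = tl x (br y x' y') + eps b (a' + b') *: tl (br x x' y') y.
Proof. by move=> h1 h2 h3 h4; rewrite -!tlE (TB h1 h2 h3 h4). Qed.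

Lemma mcD (u v : {malg K[(B * B)%type]}) k : (u + v)@_k = u@_k + v@_k.
Proof. exact: mcoeffD. Qed.
Lemma mcZ (a : K) (u : {malg K[(B * B)%type]}) k : (a *: u)@_k = a * u@_k.
Proof. exact: mcoeffZ. Qed.
Lemma mcD1 (u v : {malg K[B]}) k : (u + v)@_k = u@_k + v@_k.
Proof. exact: mcoeffD. Qed.
Lemma mcZ1 (a : K) (u : {malg K[B]}) k : (a *: u)@_k = a * u@_k.
Proof. exact: mcoeffZ. Qed.

Lemma LB' dx dy dx' dy' dx'' dy'' x y x' y' x'' y'' :
  homog deg dx x -> homog deg dy y -> homog deg dx' x' -> homog deg dy' y' ->
  homog deg dx'' x'' -> homog deg dy'' y'' ->
  tbr (tbr (tens x y) (tens x' y')) (tens x'' y'') =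
    tbr (tens x y) (tbr (tens x' y') (tens x'' y''))
     + eps (dx' + dy') (dx'' + dy'') *: tbr (tbr (tens x y) (tens x'' y'')) (tens x' y').
Proof.
move=> hx hy hx' hy' hx'' hy''.
rewrite !tlE (TBl hx hy hx' hy') (TBl hx' hy' hx'' hy'') (TBl hx hy hx'' hy'').
rewrite !tbrDl !tbrZl !tbrDr !tbrZr.
rewrite (TBl hx (hbrg hy hx' hy') hx'' hy'') (TBl (hbrg hx hx' hy') hy hx'' hy'').
rewrite (TBl hx hy hx' (hbrg hy' hx'' hy'')) (TBl hx hy (hbrg hx' hx'' hy'') hy').
rewrite (TBl hx (hbrg hy hx'' hy'') hx' hy') (TBl (hbrg hx hx'' hy'') hy hx' hy').
have tern := htl; case: tern => _ _ _ _ tern.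
rewrite (tern _ _ _ _ _ _ _ _ _ _ hy hx' hy' hx'' hy'').
rewrite (tern _ _ _ _ _ _ _ _ _ _ hx hx' hy' hx'' hy'').
exact: (abstractLB hsk tl_lin1 tl_lin2).
Qed.

Lemma homog_tbr a b S T : homog (tdeg deg) a S -> homog (tdeg deg) b T ->
  homog (tdeg deg) (a + b) (tbr S T).
Proof.
move=> hS hT; rewrite (lin_ext S (tbr_lin1 T)); apply: homog_ext => p hp.
rewrite (lin_ext T (tbr_lin2 _)); apply: homog_ext => q hq.
rewrite tbrE bilU /F.
have ea := hS _ hp; have eb := hT _ hq.
case: p hp ea => i j _; case: q hq eb => i' j' _; rewrite /tdeg /= => <- <-.
apply: homogD; last apply: homogZ.
  have E : deg i + (deg j + deg i' + deg j') = deg i + deg j + (deg i' + deg j').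
    by rewrite !(@addrA G).
  exact: (homogE (homog_tens (@homogU _ _ _ deg i) (@hbr j i' j')) E).
have E : deg i + deg i' + deg j' + deg j = deg i + deg j + (deg i' + deg j').
  by rewrite (@addrAC G (deg i + deg i')) (@addrAC G (deg i) (deg i')) (@addrA G (deg i + deg j)).
exact: (homogE (homog_tens (@hbr i i' j') (@homogU _ _ _ deg j)) E).
Qed.

Lemma Leib a b c S T U : homog (tdeg deg) a S -> homog (tdeg deg) b T ->
  homog (tdeg deg) c U ->
  tbr (tbr S T) U = tbr S (tbr T U) + eps b c *: tbr (tbr S U) T.
Proof.
move=> hS hT hU; set e := eps b c.
apply (@ext_eq _ _ _ (fun u => tbr (tbr u T) U)
   (fun u => tbr u (tbr T U) + e *: tbr (tbr u U) T) S).
- exact: islin_comp (tbr_lin1 _) (tbr_lin1 _).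
- exact: islin_addZ (tbr_lin1 _) (islin_comp (tbr_lin1 _) (tbr_lin1 _)).
move=> [i j] _ /=.
apply (@ext_eq _ _ _ (fun u => tbr (tbr << (i, j) >> u) U)
   (fun u => tbr << (i, j) >> (tbr u U) + e *: tbr (tbr << (i, j) >> U) u) T).
- exact: islin_comp (tbr_lin2 _) (tbr_lin1 _).
- exact: islin_addZ (islin_comp (tbr_lin1 _) (tbr_lin2 _)) (tbr_lin2 _).
move=> [i' j'] hq /=.
apply (@ext_eq _ _ _ (fun u => tbr (tbr << (i, j) >> << (i', j') >>) u)
   (fun u => tbr << (i, j) >> (tbr << (i', j') >> u)
             + e *: tbr (tbr << (i, j) >> u) << (i', j') >>) U).
- exact: (tbr_lin2 _).
- exact: islin_addZ (islin_comp (tbr_lin2 _) (tbr_lin2 _))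
                    (islin_comp (tbr_lin2 _) (tbr_lin1 _)).
move=> [i'' j''] hr /=.
rewrite /e -(hT _ hq) -(hU _ hr) /tdeg /=.
rewrite -(tensU K i j) -(tensU K i' j') -(tensU K i'' j'').
exact: LB' (@homogU _ _ _ deg i) (@homogU _ _ _ deg j) (@homogU _ _ _ deg i') (@homogU _ _ _ deg j') (@homogU _ _ _ deg i'') (@homogU _ _ _ deg j'').
Qed.

End Main.

Theorem mainTheorem11 (G : zmodType) (K : fieldType) (B : choiceType)
  (deg : B -> G) (eps : G -> G -> K)
  (br : {malg K[B]} -> {malg K[B]} -> {malg K[B]} -> {malg K[B]}) :
  (2%:R : K) != 0 ->
  skew_bichar eps ->
  ternary_leibniz_color deg eps br ->
  leibniz_color (tdeg deg) eps (tbracket deg eps br)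
  /\ (forall a b a' b' (x y x' y' : {malg K[B]}),
        homog deg a x -> homog deg b y -> homog deg a' x' -> homog deg b' y' ->
        tbracket deg eps br (tens x y) (tens x' y')
          = tens x (br y x' y') + eps b (a' + b') *: tens (br x x' y') y).
Proof.
move=> _ hsk htl; split; last first.
  by move=> a b a' b' x y x' y' hx hy hx' hy'; exact: (TB htl hx hy hx' hy').
split.
- by move=> T; exact: (tbr_lin1 deg eps br T).
- by move=> S; exact: (tbr_lin2 deg eps br S).
- by move=> a b x y hx hy; exact: (homog_tbr htl hx hy).
- by move=> a b c x y z hx hy hz; exact: (Leib hsk htl hx hy hz).
Qed.
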